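(* Let $S$ be an integral monoid with zero $0$, and let $0,1\in E\subseteq E(S)$. Then $S$ is inductive when regarded as an $E$-demigroup via $d(s)=1$ for all $s$ (i.e. as a left $E$-monoid) if and only if it is inductive when regarded as an $E$-demigroup via $d(0)=0$ and $d(s)=1$ for $s\neq0$ (i.e. as a left $E$-monoid with zero). In that case $C^0_E(S)$ is closed under the multiplication of $Rest(E,S)$, and the multiplication of $Rest_0(E,S)$ coincides with the restriction to $C^0_E(S)$ of the multiplication of $Rest(E,S)$.
   Context: For a semigroup $S$, $E(S)$ is its set of idempotents; for $e,f\in E(S)$, $e\le_r f$ iff $e=ef$. $E\subseteq E(S)$ is right pre-reduced if $e=ef$ and $f=fe$ imply $e=f$ for $e,f\in E$. A monoid with zero is integral if $st=0$ implies $s=0$ or $t=0$. A demigroup is a semigroup $S$ with unary $d$ such that $d(x)\in E(S)$, $d(x)x=x$, $d(xy)=d(xd(y))$. For $E\subseteq E(S)$, $S$ is an $E$-demigroup if $d(s)\in E$ for all $s$ and $ed(e)=e$ for all $e\in E$. It is inductive if $E$ is right pre-reduced, $(E,\le_r)$ is a meet-semilattice with meet $\wedge$, and there is a function $\cdot:S\times E\to E$ (necessarily unique) with (I1) for all $t\in S$, $e\in E$, $s\in S$: ($ste=st$ and $sd(t)=s$) iff $s(t\cdot e)=s$; (I2) for $s\in S$, $e,f\in E$: $se=sf=s$ implies $s(e\wedge f)=s$. For an inductive $E$-demigroup, $Rest_d(E,S)$ is the set $C^d_E(S)=\{(e,s)\in E\times S\mid es=s,\ d(e)=d(s)\}$ with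 multiplication $(e,s)(f,t)=(e\wedge(s\cdot f),(e\wedge(s\cdot f))st)$ and $D((e,s))=(e,e)$. $Rest(E,S)$ denotes $Rest_d(E,S)$ for $d\equiv1$ (underlying set $C_E(S)=\{(e,s)\in E\times S\mid es=s\}$); $Rest_0(E,S)$ denotes $Rest_d(E,S)$ for $d(0)=0$, $d(s)=1$ ($s\ne0$) (underlying set $C^0_E(S)=\{(e,s)\in C_E(S)\mid s=0\Rightarrow e=0\}$). *)

(* Defs.v *)
Set Implicit Arguments.

Section Defs.
Variable S : Type.
Variable mul : S -> S -> S.

Definition idem (e : S) : Prop := mul e e = e.

Definition demigroup (d : S -> S) : Prop :=
  (forall x, idem (d x)) /\
  (forall x, mul (d x) x = x) /\
  (forall x y, d (mul x y) = d (mul x (d y))).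

Definition E_demigroup (E : S -> Prop) (d : S -> S) : Prop :=
  demigroup d /\ (forall s, E (d s)) /\ (forall e, E e -> mul e (d e) = e).

Definition le_r (e f : S) : Prop := e = mul e f.

Definition right_pre_reduced (E : S -> Prop) : Prop :=
  forall e f, E e -> E f -> e = mul e f -> f = mul f e -> e = f.

Definition is_meet (E : S -> Prop) (m : S -> S -> S) : Prop :=
  forall e f, E e -> E f ->
    E (m e f) /\ le_r (m e f) e /\ le_r (m e f) f /\
    (forall g, E g -> le_r g e -> le_r g f -> le_r g (m e f)).

(* dot : S x E -> E satisfying (I1) and (I2) relative to d and the meet m *)
Definition dot_ok (E : S -> Prop) (d : S -> S) (m : S -> S -> S)
    (dot : S -> S -> S) : Prop :=
  (forall t e, E e -> E (dot t e)) /\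
  (forall t e s, E e ->
     ((mul (mul s t) e = mul s t /\ mul s (d t) = s) <-> mul s (dot t e) = s)) /\
  (forall s e f, E e -> E f -> mul s e = s -> mul s f = s -> mul s (m e f) = s).

Definition inductive (E : S -> Prop) (d : S -> S) : Prop :=
  E_demigroup E d /\ right_pre_reduced E /\
  exists m, is_meet E m /\ exists dot, dot_ok E d m dot.

Definition C_E (E : S -> Prop) (p : S * S) : Prop :=
  E (fst p) /\ mul (fst p) (snd p) = snd p.

Definition C0_E (E : S -> Prop) (zero : S) (p : S * S) : Prop :=
  C_E E p /\ (snd p = zero -> fst p = zero).

Definition rest_mul (m : S -> S -> S) (dot : S -> S -> S) (p q : S * S) : S * S :=
  let g := m (fst p) (dot (snd p) (fst q)) in
  (g, mul (mul g (snd p)) (snd q)).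

End Defs.

(* Main.v *)
Require Import Defs.
From Stdlib Require Import Classical ClassicalEpsilon.

Theorem proposition3p12 :
  forall (S : Type) (mul : S -> S -> S) (one zero : S) (E : S -> Prop),
    (forall x y z, mul x (mul y z) = mul (mul x y) z) ->
    (forall x, mul one x = x) -> (forall x, mul x one = x) ->
    (forall x, mul zero x = zero) -> (forall x, mul x zero = zero) ->
    (forall s t, mul s t = zero -> s = zero \/ t = zero) ->
    (forall e, E e -> idem mul e) -> E zero -> E one ->
    forall d0 : S -> S, d0 zero = zero -> (forall s, s <> zero -> d0 s = one) ->
    (inductive mul E (fun _ => one) <-> inductive mul E d0) /\
    (inductive mul E (fun _ => one) ->
     forall (m dot1 dot0 : S -> S -> S),
       is_meet mul E m ->
       dot_ok mul E (fun _ => one) m dot1 ->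
       dot_ok mul E d0 m dot0 ->
       forall p q, C0_E mul E zero p -> C0_E mul E zero q ->
         C0_E mul E zero (rest_mul mul m dot1 p q) /\
         rest_mul mul m dot1 p q = rest_mul mul m dot0 p q).
Proof.
  intros S mul one zero E assoc l1 r1 lz rz integ idemE Ez Eo d0 d00 d0ne.
  unfold idem in idemE.
  assert (ED0 : E_demigroup mul E d0).
  { split; [split; [|split]|split].
    - intro x; unfold idem; destruct (classic (x = zero)) as [H|H].
      + subst; rewrite d00; apply idemE, Ez.
      + rewrite (d0ne x H); apply l1.
    - intro x; destruct (classic (x = zero)) as [H|H].
      + subst; rewrite d00; apply lz.
      + rewrite (d0ne x H); apply l1.
    - intros x y; destruct (classic (y = zero)) as [H|H].
      + subst; rewrite d00, rz; reflexivity.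
      + rewrite (d0ne y H), r1. destruct (classic (x = zero)) as [Hx|Hx].
        * subst; rewrite lz; reflexivity.
        * assert (mul x y <> zero) by (intro Hc; destruct (integ _ _ Hc); contradiction).
          rewrite (d0ne _ H0), (d0ne _ Hx); reflexivity.
    - intro x; destruct (classic (x = zero)) as [H|H].
      + subst; rewrite d00; exact Ez.
      + rewrite (d0ne x H); exact Eo.
    - intros x Hx; destruct (classic (x = zero)) as [H|H].
      + subst; rewrite d00; apply lz.
      + rewrite (d0ne x H); apply r1. }
  assert (ED1 : E_demigroup mul E (fun _ => one)).
  { split; [split; [|split]|split]; intros; unfold idem; auto. }
  split.
  - split; intros [ED [RPR [m [Hm [dot [Hdot1 [Hdot2 Hdot3]]]]]]];
      (split; [assumption| split; [exact RPR| exists m; split; [exact Hm|]]]).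
    + exists (fun t e => if excluded_middle_informative (t = zero) then zero else dot t e).
      split; [|split].
      * intros t e He; destruct (excluded_middle_informative _); auto.
      * intros t e s He; destruct (excluded_middle_informative (t = zero)) as [Ht|Ht].
        -- subst. rewrite d00, rz, lz.
           split; [intros [_ H]; exact H| intros H; split; [reflexivity|exact H]].
        -- rewrite (d0ne t Ht). exact (Hdot2 t e s He).
      * exact Hdot3.
    + exists (fun t e => if excluded_middle_informative (t = zero) then one else dot t e).
      split; [|split].
      * intros t e He; destruct (excluded_middle_informative _); auto.
      * intros t e s He; destruct (excluded_middle_informative (t = zero)) as [Ht|Ht].
        -- subst. rewrite rz, lz, r1.
           split; [intros [_ H]; exact H| intros H; split; [reflexivity|exact H]].
        -- pose proof (Hdot2 t e s He) as H. rewrite (d0ne t Ht) in H. exact H.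
      * exact Hdot3.
  - intros Hind m dot1 dot0 Hm [D1E [D1I1 D1I2]] [D0E [D0I1 D0I2]]
      [e s] [f t] [[Ee Hes] Hs0] [[Ef Hft] Ht0]. simpl in *.
    destruct Hind as [_ [RPR _]].
    assert (meet0 : forall x, E x -> m zero x = zero).
    { intros x Hx; destruct (Hm zero x Ez Hx) as [_ [H1 _]].
      unfold le_r in H1; rewrite rz in H1; exact H1. }
    assert (meet0r : forall x, E x -> m x zero = zero).
    { intros x Hx; destruct (Hm x zero Hx Ez) as [_ [_ [H1 _]]].
      unfold le_r in H1; rewrite rz in H1; exact H1. }
    assert (dot_eq : forall u x, u <> zero -> E x -> dot1 u x = dot0 u x).
    { intros u x Hu Hx.
      pose proof (D1E u x Hx) as Ea. pose proof (D0E u x Hx) as Eb.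
      destruct (proj2 (D1I1 u x (dot1 u x) Hx) (idemE _ Ea)) as [A1 A2].
      destruct (proj2 (D0I1 u x (dot0 u x) Hx) (idemE _ Eb)) as [B1 B2].
      assert (ab : mul (dot1 u x) (dot0 u x) = dot1 u x).
      { apply (proj1 (D0I1 u x (dot1 u x) Hx)). split; [exact A1|].
        rewrite (d0ne u Hu); exact A2. }
      assert (ba : mul (dot0 u x) (dot1 u x) = dot0 u x).
      { apply (proj1 (D1I1 u x (dot0 u x) Hx)). split; [exact B1|].
        apply r1. }
      apply RPR; auto. }
    assert (dot1z : forall u, u <> zero -> dot1 u zero = zero).
    { intros u Hu. pose proof (D1E u zero Ez) as Ea.
      destruct (proj2 (D1I1 u zero (dot1 u zero) Ez) (idemE _ Ea)) as [A1 _].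
      rewrite rz in A1. destruct (integ _ _ (eq_sym A1)); [assumption|contradiction]. }
    unfold rest_mul, C0_E, C_E; simpl.
    destruct (classic (s = zero)) as [Hs|Hs].
    + subst s. rewrite (Hs0 eq_refl).
      rewrite (meet0 _ (D1E _ _ Ef)), (meet0 _ (D0E _ _ Ef)), !lz.
      split; [split; [split; [exact Ez| reflexivity]| auto]| reflexivity].
    + pose proof (D1E s f Ef) as Eg.
      destruct (Hm e (dot1 s f) Ee Eg) as [EG _].
      pose proof (idemE _ EG) as HG.
      split; [split; [split|]|].
      * exact EG.
      * rewrite !assoc, HG; reflexivity.
      * intro H. destruct (integ _ _ H) as [H1|H1].
        -- destruct (integ _ _ H1) as [H2|H2]; [exact H2|contradiction].
        -- rewrite (Ht0 H1), (dot1z s Hs). apply meet0r, Ee.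
      * rewrite (dot_eq s f Hs Ef); reflexivity.
Qed.
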